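(* Let $(G,k)$ be an instance and $V_{\mathrm{ld}}$ the set of large-dense vertices. Suppose that no vertex $v\in V_{\mathrm{ld}}$ admits a collection of $k+1$ vertex sets, each contained in $V_{\mathrm{ld}}$ and inducing $P_3$, such that any two of them intersect exactly in $\{v\}$. If there is a collection $\mathcal{P}$ of more than $k^2$ vertex sets, each contained in $V_{\mathrm{ld}}$ and inducing $P_3$, such that any two members of $\mathcal{P}$ share at most one vertex, then $(G,k)$ is a no-instance.
   Context: Graphs are undirected, without self-loops, possibly with multi-edges. $N(v)$ is the set of vertices adjacent to $v$; $\rho(v)$ is the number of unordered pairs $\{u_1,u_2\}\subseteq N(v)$ joined by at least one edge. A vertex $v$ is large-dense if $|N(v)|>7k$ and $\rho(v)> |N(v)|(|N(v)|-1)/4$. A set of three distinct vertices $\{v_1,v_2,v_3\}$ induces $P_3$ if $v_1v_2$ and $v_2v_3$ are edges (possibly multi-edges) and $v_1v_3$ is not an edge. A vertex set induces a clique if between any two distinct vertices there is exactly one edge, and a tree if it is connected and acyclic (two parallel edges form a cycle). A feasible solution is $X\subseteq V$, $|X|\le k$, with every component of $G-X$ a clique or a tree; $(G,k)$ is a yes-instance if one exists. *)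

(* Defs.v *)
(* A multigraph on a finite vertex type T is given by an
   edge-multiplicity function m : T -> T -> nat (m u v = number of edges
   between u and v); it is assumed symmetric and loopless in the theorem. *)
From mathcomp Require Import all_boot.
Set Implicit Arguments. Unset Strict Implicit. Unset Printing Implicit Defensive.

Section Multigraph.
Variable T : finType.
Variable m : T -> T -> nat.

Definition adj : rel T := fun u v => 0 < m u v.

Definition nbhd (v : T) : {set T} := [set u | adj v u].

Definition rho (v : T) : nat :=
  #|[set S : {set T} | (S \subset nbhd v) &&
     [exists u1, exists u2, [&& u1 != u2, S == [set u1; u2] & adj u1 u2]]]|.

Definition large_dense (k : nat) (v : T) : bool :=
  (7 * k < #|nbhd v|) && (#|nbhd v| * (#|nbhd v| - 1) < 4 * rho v).

Definition V_ld (k : nat) : {set T} := [set v | large_dense k v].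

Definition induces_P3 (S : {set T}) : Prop :=
  exists v1 v2 v3 : T, [/\ v1 != v2, v2 != v3, v1 != v3,
    S = [set v1; v2; v3] & [/\ adj v1 v2, adj v2 v3 & ~~ adj v1 v3]].

Definition adj_in (C : {set T}) : rel T :=
  fun x y => [&& adj x y, x \in C & y \in C].

Definition connected_in (C : {set T}) : Prop :=
  forall x y, x \in C -> y \in C -> connect (adj_in C) x y.

Definition component_of_minus (X C : {set T}) : Prop :=
  [/\ C != set0, [disjoint C & X], connected_in C &
      forall x y, x \in C -> y \notin X -> adj x y -> y \in C].

Definition induces_clique (C : {set T}) : Prop :=
  forall u v, u \in C -> v \in C -> u != v -> m u v = 1.

(* acyclic: no two parallel edges (a 2-cycle) and no cycle on >= 3
   distinct vertices *)
Definition acyclic_in (C : {set T}) : Prop :=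
  (forall u v, u \in C -> v \in C -> m u v <= 1) /\
  ~ (exists s : seq T,
       [/\ uniq s, 3 <= size s, {subset s <= C} & cycle adj s]).

Definition induces_tree (C : {set T}) : Prop :=
  connected_in C /\ acyclic_in C.

Definition feasible (k : nat) (X : {set T}) : Prop :=
  #|X| <= k /\
  forall C, component_of_minus X C -> induces_clique C \/ induces_tree C.

Definition yes_instance (k : nat) : Prop := exists X, feasible k X.

End Multigraph.

(* Main.v *)
Require Import Defs.
From mathcomp Require Import all_boot.
From mathcomp Require Import zify.
Set Implicit Arguments. Unset Strict Implicit. Unset Printing Implicit Defensive.

Lemma card_bigcup_le (I T : finType) (A : {set I}) (F : I -> {set T}) :
  #|\bigcup_(i in A) F i| <= \sum_(i in A) #|F i|.
Proof.
elim/big_rec2: _ => [|i n U _ h]; first by rewrite cards0.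
by rewrite (leq_trans (leq_card_setU _ _).1) ?leq_add2l.
Qed.

Lemma ctr (T : finType) (e : rel T) x y z : connect e x y -> connect e y z -> connect e x z.
Proof. move=> h1 h2; exact: (connect_trans h1 h2). Qed.

Section Pf.
Variable T : finType.
Variable m : T -> T -> nat.
Hypothesis m_sym : forall u v, m u v = m v u.
Hypothesis m_loopless : forall v, m v v = 0.

Lemma adj_sym : symmetric (adj m).
Proof. by move=> x y; rewrite /adj m_sym. Qed.

Lemma adj_irr v : ~~ adj m v v.
Proof. by rewrite /adj m_loopless. Qed.

Variable X : {set T}.
Definition comp (v : T) : {set T} := [set y | connect (adj_in m (~: X)) v y].

Lemma e_sym : symmetric (adj_in m (~: X)).
Proof. by move=> x y; rewrite /adj_in adj_sym; congr (_ && _); exact: andbC. Qed.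

Lemma path_notX p x : path (adj_in m (~: X)) x p -> x \notin X -> last x p \notin X.
Proof.
elim: p x => [|z p IH] x //= /andP [/and3P [_ _ hz] hp] hx.
by apply: IH hp _; rewrite inE in hz.
Qed.

Lemma comp_notX v y : v \notin X -> y \in comp v -> y \notin X.
Proof. rewrite inE => hv /connectP [p hp ->]; exact: path_notX. Qed.

Lemma comp_self v : v \in comp v.
Proof. by rewrite inE connect0. Qed.

Lemma comp_closed v x y : v \notin X -> x \in comp v -> y \notin X ->
  adj m x y -> y \in comp v.
Proof.
move=> hv hx hy hxy.
have h1 : connect (adj_in m (~: X)) v x by rewrite inE in hx.
have h2 : connect (adj_in m (~: X)) x y.
  apply: connect1; by rewrite /adj_in hxy !inE hy (comp_notX hv hx).
by rewrite inE; exact: ctr h1 h2.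
Qed.

Lemma path_comp v p x : x \in comp v -> path (adj_in m (~: X)) x p ->
  connect (adj_in m (comp v)) x (last x p).
Proof.
elim: p x => [|z p IH] x hx /=; first by rewrite connect0.
move=> /andP [hxz hp].
have hz : z \in comp v.
  rewrite inE; apply: ctr (connect1 hxz); by rewrite inE in hx.
apply: ctr (IH z hz hp); apply: connect1.
rewrite /adj_in hx hz !andbT; by case/and3P: hxz.
Qed.

Lemma comp_component v : v \notin X -> component_of_minus m X (comp v).
Proof.
move=> hv; split.
- by apply/set0Pn; exists v; exact: comp_self.
- rewrite disjoint_subset; apply/subsetP => y hy; rewrite inE; exact: comp_notX hv hy.
- move=> x y hx hy.
  have hxy : connect (adj_in m (~: X)) x y.
    rewrite inE in hx hy.
    have hxv : connect (adj_in m (~: X)) x v by rewrite (sym_connect_sym e_sym).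
    rewrite inE in hy; exact: ctr hxv hy.
  case/connectP: hxy => p hp ->; exact: path_comp.
- move=> x y hx hy hxy; exact: comp_closed hxy.
Qed.

Lemma tree_contra k v : v \notin X -> #|X| <= k -> v \in V_ld m k ->
  ~ induces_tree m (comp v).
Proof.
move=> hv hX hld [_ [_ hcyc]].
have key : forall u1 u2, u1 \in nbhd m v -> u2 \in nbhd m v -> u1 != u2 ->
    adj m u1 u2 -> (u1 \in X) || (u2 \in X).
  move=> u1 u2 hu1 hu2 h12 a12.
  case: (boolP (u1 \in X)) => //= h1.
  case: (boolP (u2 \in X)) => // h2.
  exfalso; apply: hcyc; exists [:: v; u1; u2].
  have hvu1 : v != u1 by apply: contraTneq hu1 => <-; rewrite inE adj_irr.
  have hvu2 : v != u2 by apply: contraTneq hu2 => <-; rewrite inE adj_irr.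
  rewrite inE in hu1; rewrite inE in hu2.
  have c1 := comp_closed hv (comp_self v) h1 hu1.
  have c2 := comp_closed hv (comp_self v) h2 hu2.
  split => //.
  - by rewrite /= !inE negb_or hvu1 hvu2 h12.
  - by move=> y; rewrite !in_cons in_nil orbF => /or3P [] /eqP ->; rewrite ?c1 ?c2 ?comp_self.
  - by rewrite /= hu1 a12 adj_sym hu2.
set d := #|nbhd m v|.
have hsub : [set S : {set T} | (S \subset nbhd m v) &&
     [exists u1, exists u2, [&& u1 != u2, S == [set u1; u2] & adj m u1 u2]]]
   \subset \bigcup_(x in X) [set [set x; u] | u in nbhd m v].
  apply/subsetP => S; rewrite inE => /andP [hS /existsP [u1 /existsP [u2 /and3P [h12 /eqP hSe a12]]]].
  have hu1 : u1 \in nbhd m v by apply: (subsetP hS); rewrite hSe !inE eqxx.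
  have hu2 : u2 \in nbhd m v by apply: (subsetP hS); rewrite hSe !inE eqxx orbT.
  case/orP: (key _ _ hu1 hu2 h12 a12) => hx.
  - by apply/bigcupP; exists u1 => //; apply/imsetP; exists u2.
  - by apply/bigcupP; exists u2 => //; apply/imsetP; exists u1 => //; rewrite setUC.
have hrho : rho m v <= #|X| * d.
  rewrite /rho; apply: (leq_trans (subset_leq_card hsub)).
  apply: (leq_trans (card_bigcup_le _ _)).
  rewrite -sum_nat_const; apply: leq_sum => x _; exact: leq_imset_card.
move: hld; rewrite inE /large_dense -/d => /andP [h7 h4].
have hr : rho m v <= k * d by apply: (leq_trans hrho); rewrite leq_mul2r hX orbT.
nia.
Qed.

End Pf.

Theorem mainTheorem12 (T : finType) (m : T -> T -> nat) (k : nat)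
  (m_sym : forall u v, m u v = m v u)
  (m_loopless : forall v, m v v = 0)
  (no_flower : ~ exists v, v \in V_ld m k /\
     exists F : {set {set T}},
       [/\ #|F| = k.+1,
           forall P, P \in F -> P \subset V_ld m k /\ induces_P3 m P &
           forall P Q, P \in F -> Q \in F -> P != Q -> P :&: Q = [set v]])
  (Pc : {set {set T}})
  (Pc_big : k ^ 2 < #|Pc|)
  (Pc_P3 : forall P, P \in Pc -> P \subset V_ld m k /\ induces_P3 m P)
  (Pc_sparse : forall P Q, P \in Pc -> Q \in Pc -> P != Q -> #|P :&: Q| <= 1) :
  ~ yes_instance m k.
Proof.
move=> [X [hX hcomp]].
have hit : forall P, P \in Pc -> exists2 x, x \in X & x \in P.
  move=> P hP; case: (Pc_P3 P hP) => hsub [v1 [v2 [v3 [h12 h23 h13 hPe [a12 a23 na13]]]]].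
  case: (boolP (v1 \in X)) => h1; first by exists v1; rewrite // hPe !inE eqxx.
  case: (boolP (v2 \in X)) => h2; first by exists v2; rewrite // hPe !inE eqxx ?orbT.
  case: (boolP (v3 \in X)) => h3; first by exists v3; rewrite // hPe !inE eqxx ?orbT.
  exfalso.
  have hld : v1 \in V_ld m k by apply: (subsetP hsub); rewrite hPe !inE eqxx.
  case: (hcomp _ (comp_component m_sym h1)) => [hcl | htr];
    last exact: (tree_contra m_sym m_loopless h1 hX hld htr).
  have c1 := comp_self m X v1.
  have c2 := comp_closed h1 c1 h2 a12.
  have c3 := comp_closed h1 c2 h3 a23.
  by move: na13; rewrite /adj (hcl _ _ c1 c3 h13).
have [x hx hbig] : exists2 x, x \in X & k < #|[set P in Pc | x \in P]|.
  case: (boolP [exists x in X, k < #|[set P in Pc | x \in P]|]).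
    by case/exists_inP => x hx hk; exists x.
  move/exists_inPn => hn; exfalso.
  have hs : Pc \subset \bigcup_(x in X) [set P in Pc | x \in P].
    apply/subsetP => P hP; case: (hit P hP) => x hx hxP.
    by apply/bigcupP; exists x => //; rewrite inE hP hxP.
  have : #|Pc| <= #|X| * k.
    apply: (leq_trans (subset_leq_card hs)); apply: (leq_trans (card_bigcup_le _ _)).
    rewrite -sum_nat_const; apply: leq_sum => y hy; by rewrite leqNgt hn.
  have : #|X| * k <= k ^ 2 by rewrite expnS expn1 leq_mul2r hX orbT.
  lia.
case/card_geqP: hbig => s [us ss subs].
set F := [set P in s].
have hF : #|F| = k.+1 by rewrite /F cardsE (card_uniqP us) ss.
have hFs : forall P, P \in F -> P \in Pc /\ x \in P.
  by move=> P; rewrite inE => /subs; rewrite inE => /andP.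
apply: no_flower; exists x; split.
  have : 0 < #|F| by rewrite hF.
  case/card_gt0P => P hP; case: (hFs P hP) => hP1 hxP.
  by case: (Pc_P3 P hP1) => hsub _; apply: (subsetP hsub).
exists F; split => //.
  by move=> P hP; apply: Pc_P3; case: (hFs P hP).
move=> P Q hP hQ hPQ; case: (hFs P hP) => hP1 hxP; case: (hFs Q hQ) => hQ1 hxQ.
apply/eqP; rewrite eq_sym eqEcard cards1 (Pc_sparse P Q hP1 hQ1 hPQ) andbT.
by rewrite sub1set inE hxP hxQ.
Qed.
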